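(* Let $\varphi:L\to L'$ be a morphism of co-Heyting algebras and $d$ a positive integer. (1) $\varphi(dL)\subseteq dL'$. (2) If $\varphi$ is surjective then: (a) $\varphi(dL)=dL'$; (b) $\dim L'<d$ if and only if $dL\subseteq\operatorname{Ker}\varphi$; (c) $\operatorname{Ker}\varphi\subseteq dL$ if and only if $\varphi^{-1}(dL')=dL$. (3) If $\varphi$ is surjective and the ideal $dL$ is principal, then $dL'$ is principal and $\varphi(\varepsilon_d(L))=\varepsilon_d(L')$.
   Context: A co-Heyting algebra is a bounded distributive lattice $(L,0,1,\vee,\wedge)$ such that $a-b=\min\{c\in L: a\le b\vee c\}$ exists for all $a,b$; morphisms preserve $0,1,\vee,\wedge,-$, and $\operatorname{Ker}\varphi=\varphi^{-1}(\{0\})$. $\operatorname{Spec}L$ is the set of prime filters ordered by inclusion; the height (resp. coheight) of a prime filter is its foundation rank (resp. foundation rank for the reverse order) in $\operatorname{Spec}L$, where foundation rank is defined by: $\operatorname{rk}x\ge\beta+1$ iff some $y<x$ has $\operatorname{rk}y\ge\beta$, and at limit ordinals by intersection. $\operatorname{codim}_L a=\min\{\operatorname{height}\mathfrak p: a\in\mathfrak p\in\operatorname{Spec}L\}$ ($\min\emptyset=+\infty$), $\dim_L a=\sup\{\operatorname{coheight}\mathfrak p: a\in\mathfrak p\in\operatorname{Spec}L\}$ ($\sup\emptyset=-\infty$), and $\dim L=\dim_L 1$. $dL=\{a\in L:\operatorname{codim}_La\ge d\}$, an ideal of $L$; when it is principal, $\varepsilon_d(L)$ denotes its generator. *)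

(* Defs.v *)
From mathcomp Require Import all_boot all_order.
Unset Printing Implicit Defensive.
Import Order.Theory.
Local Open Scope order_scope.

(* Bounded distributive lattices are mathcomp's [tbDistrLatticeType]
   (bottom = 0 = \bot, top = 1 = \top, join `|`, meet `&`).
   A co-Heyting algebra is such a lattice together with an operation [sub]
   such that [sub a b] is the least c with a <= b `|` c.  Since this least
   element is unique, giving the operation is equivalent to requiring it
   to exist. *)
Definition coHeyting {disp : Order.disp_t} {L : tbDistrLatticeType disp}
  (sub : L -> L -> L) : Prop :=
  forall a b c : L, (a <= b `|` c) <-> (sub a b <= c).

Definition coH_morphism {d1 d2 : Order.disp_t}
  {L : tbDistrLatticeType d1} {L' : tbDistrLatticeType d2}
  (sub : L -> L -> L) (sub' : L' -> L' -> L') (phi : L -> L') : Prop :=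
  [/\ phi \bot = \bot, phi \top = \top,
      (forall a b, phi (a `|` b) = phi a `|` phi b),
      (forall a b, phi (a `&` b) = phi a `&` phi b)
    & (forall a b, phi (sub a b) = sub' (phi a) (phi b))].

Definition kernel {d1 d2 : Order.disp_t}
  {L : tbDistrLatticeType d1} {L' : tbDistrLatticeType d2}
  (phi : L -> L') (a : L) : Prop := phi a = \bot.

Definition prime_filter {disp : Order.disp_t} {L : tbDistrLatticeType disp}
  (p : L -> Prop) : Prop :=
  [/\ p \top, ~ p \bot,
      (forall a b, a <= b -> p a -> p b),
      (forall a b, p a -> p b -> p (a `&` b))
    & (forall a b, p (a `|` b) -> p a \/ p b)].

Definition strict_incl {disp : Order.disp_t} {L : tbDistrLatticeType disp}
  (q p : L -> Prop) : Prop :=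
  (forall x, q x -> p x) /\ exists x, p x /\ ~ q x.

(* [height_ge n p] : the foundation rank of p in Spec L is >= n
   (finite n: rk >= 0 always; rk >= n+1 iff some q < p has rk q >= n). *)
Fixpoint height_ge {disp : Order.disp_t} {L : tbDistrLatticeType disp}
  (n : nat) (p : L -> Prop) : Prop :=
  match n with
  | 0 => True
  | n'.+1 => exists q, prime_filter q /\ strict_incl q p /\ height_ge n' q
  end.

(* [coheight_ge n p] : foundation rank of p for the reverse order is >= n. *)
Fixpoint coheight_ge {disp : Order.disp_t} {L : tbDistrLatticeType disp}
  (n : nat) (p : L -> Prop) : Prop :=
  match n with
  | 0 => True
  | n'.+1 => exists q, prime_filter q /\ strict_incl p q /\ coheight_ge n' q
  end.

(* codim_L a >= d  <->  every prime filter containing a has height >= d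
   (min over the empty set is +oo). *)
Definition codim_ge {disp : Order.disp_t} {L : tbDistrLatticeType disp}
  (d : nat) (a : L) : Prop :=
  forall p, prime_filter p -> p a -> height_ge d p.

Definition dIdeal {disp : Order.disp_t} (L : tbDistrLatticeType disp)
  (d : nat) (a : L) : Prop := codim_ge d a.

(* dim L < d  <->  sup of coheights of all prime filters is < d
   (sup over the empty set is -oo). *)
Definition dim_lt {disp : Order.disp_t} (L : tbDistrLatticeType disp)
  (d : nat) : Prop :=
  forall p : L -> Prop, prime_filter p -> p \top -> ~ coheight_ge d p.

Definition is_eps {disp : Order.disp_t} (L : tbDistrLatticeType disp)
  (d : nat) (e : L) : Prop :=
  forall a : L, dIdeal L d a <-> a <= e.

Definition surj {A B : Type} (f : A -> B) : Prop := forall b, exists a, f a = b.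

(* Main.v *)
Require Import Defs.
From mathcomp Require Import all_boot all_order.
From mathcomp Require Import classical_sets.
From Stdlib Require Import Classical FunctionalExtensionality PropExtensionality.
Import Order.Theory.
Local Open Scope order_scope.

Section PFT.
Context {disp : Order.disp_t} {L : tbDistrLatticeType disp}.
Variables (F I : L -> Prop).
Hypotheses (Ftop : F \top) (Fup : forall a b, a <= b -> F a -> F b)
  (Fmeet : forall a b, F a -> F b -> F (a `&` b))
  (Ibot : I \bot) (Idown : forall a b, a <= b -> I b -> I a)
  (Ijoin : forall a b, I a -> I b -> I (a `|` b))
  (FI : forall x, F x -> I x -> False).

Definition QG (G : L -> Prop) :=
  [/\ (forall a b, a <= b -> G a -> G b),
      (forall a b, G a -> G b -> G (a `&` b)) &
      (forall x, G x -> I x -> False)].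

Definition PH (H : L -> Prop) := QG (fun x => F x \/ H x).

Lemma PH0 : PH (fun _ => False).
Proof.
split.
- move=> a b ab [Fa|[]]; left; exact: Fup Fa.
- move=> a b [Fa|[]] [Fb|[]]; left; exact: Fmeet.
- move=> x [Fx|[]]; exact: FI.
Qed.

Lemma PFT : exists p, prime_filter p /\ (forall x, F x -> p x) /\
  (forall x, p x -> I x -> False).
Proof.
have [A [PA Amax]] : exists A, PH A /\ forall B, proper A B -> ~ PH B.
  apply: Zorn_bigcup => C CP Ctot.
  set U := bigcup C (fun X => X).
  have two x y : F x \/ U x -> F y \/ U y -> exists H, [/\ PH H,
      (forall z, H z -> U z), F x \/ H x & F y \/ H y].
    have inU X : C X -> forall z, X z -> U z by move=> CX z Xz; exists X.
    case=> [Fx|[X CX Xx]]; case=> [Fy|[Y CY Yy]].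
    - by exists (fun _ => False); split => //; [exact: PH0|left|left].
    - by exists Y; split; [exact: CP|exact: inU|left|right].
    - by exists X; split; [exact: CP|exact: inU|right|left].
    - have [XY|YX] := Ctot X Y CX CY.
      + by exists Y; split; [exact: CP|exact: inU|right; exact: XY|right].
      + by exists X; split; [exact: CP|exact: inU|right|right; exact: YX].
  split.
  - move=> a b ab Ga; have [H [[Hup _ _] HU Ha _]] := two _ _ Ga Ga.
    by case: (Hup a b ab Ha) => [?|/HU ?]; [left|right].
  - move=> a b Ga Gb; have [H [[_ Hm _] HU Ha Hb]] := two _ _ Ga Gb.
    by case: (Hm a b Ha Hb) => [?|/HU ?]; [left|right].
  - move=> x Gx; have [H [[_ _ Hd] HU Ha _]] := two _ _ Gx Gx; exact: Hd.
case: PA => Aup Ameet Adisj.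
set G := fun x => F x \/ A x.
have gen a : ~ G a -> exists g i, [/\ G g, I i & g `&` a <= i].
  move=> nGa; apply: NNPP => hno.
  pose B := fun z => exists2 g, G g & g `&` a <= z.
  apply: (Amax B).
  - split.
    + move=> z Az; exists z; first by right.
      exact: leIl.
    + move=> hBA; apply: nGa; right; apply: hBA; exists \top; first by left.
      by rewrite meetC meetx1.
  - have BG z : F z \/ B z -> B z.
      by case=> // Fz; exists z; [left|exact: leIl].
    split.
    + move=> x y xy /BG [g Gg gx]; right; exists g => //; exact: le_trans xy.
    + move=> x y /BG [g Gg gx] /BG [h Gh hy]; right; exists (g `&` h).
        exact: Ameet.
      rewrite lexI; apply/andP; split.
        apply: le_trans gx; apply: leI2; [exact: leIl|exact: lexx].
      apply: le_trans hy; apply: leI2; [exact: leIr|exact: lexx].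
    + move=> x /BG [g Gg gx] Ix; apply: hno; exists g, x; split=> //.
exists G; split; last first.
  by split; [move=> x Fx; left|exact: Adisj].
split.
- by left.
- by move=> Gb; exact: Adisj Gb Ibot.
- exact: Aup.
- exact: Ameet.
- move=> a b Gab; apply: NNPP => hn.
  have [g1 [i1 [Gg1 Ii1 le1]]] := gen a (fun h => hn (or_introl h)).
  have [g2 [i2 [Gg2 Ii2 le2]]] := gen b (fun h => hn (or_intror h)).
  apply: (Adisj ((g1 `&` g2) `&` (a `|` b))).
    by apply: (Ameet) => //; exact: Ameet.
  apply: (Idown _ (i1 `|` i2)); last exact: Ijoin.
  rewrite meetUr; apply: leU2.
    apply: le_trans le1; apply: leI2; [exact: leIl|exact: lexx].
  apply: le_trans le2; apply: leI2; [exact: leIr|exact: lexx].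
Qed.
End PFT.

Section Basics.
Context {disp : Order.disp_t} {L : tbDistrLatticeType disp}.

Lemma pf_top {p : L -> Prop} : prime_filter p -> p \top.
Proof. by case. Qed.
Lemma pf_bot {p : L -> Prop} : prime_filter p -> ~ p \bot.
Proof. by case. Qed.
Lemma pf_up {p : L -> Prop} {a b : L} : prime_filter p -> a <= b -> p a -> p b.
Proof. by case=> _ _ h _ _; exact: h. Qed.
Lemma pf_meet {p : L -> Prop} {a b : L} : prime_filter p -> p a -> p b -> p (a `&` b).
Proof. by case=> _ _ _ h _; exact: h. Qed.
Lemma pf_prime {p : L -> Prop} {a b : L} : prime_filter p -> p (a `|` b) -> p a \/ p b.
Proof. by case=> _ _ _ _ h; exact: h. Qed.

Lemma codim_down n (a b : L) : a <= b -> codim_ge n b -> codim_ge n a.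
Proof. by move=> ab hb p pp pa; apply: hb => //; exact: pf_up pa. Qed.
Lemma codim_join n (a b : L) : codim_ge n a -> codim_ge n b -> codim_ge n (a `|` b).
Proof. by move=> ha hb p pp /(pf_prime pp) [/ha|/hb]; apply. Qed.
Lemma codim_bot n : codim_ge n (\bot : L).
Proof. by move=> p pp /(pf_bot pp). Qed.

Variable sub : L -> L -> L.
Hypothesis HL : coHeyting sub.

Lemma sub_le a b : a <= b `|` sub a b.
Proof. by apply/(HL a b (sub a b)). Qed.

Lemma sub_in {q : L -> Prop} {c x : L} : prime_filter q -> q c -> ~ q x -> q (sub c x).
Proof.
move=> pq qc nqx; case: (pf_prime pq (pf_up pq (sub_le c x) qc)) => //.
Qed.

Lemma GDint {r : L -> Prop} {c x : L} : prime_filter r -> r (sub c x) ->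
  exists s, [/\ prime_filter s, (forall y, s y -> r y), s c & ~ s x].
Proof.
move=> pr rs.
have [|||||||s [ps [Fs Is]]] := PFT (fun y => c <= y)
   (fun y => exists2 z, ~ r z & y <= z `|` x).
- exact: lex1.
- by move=> a b ab ca; exact: le_trans ab.
- by move=> a b ca cb; rewrite lexI ca cb.
- by exists \bot; [exact: pf_bot|exact: le0x].
- by move=> a b ab [z nz bz]; exists z => //; exact: (le_trans ab).
- move=> a b [z1 n1 h1] [z2 n2 h2]; exists (z1 `|` z2).
    by case/(pf_prime pr).
  rewrite leUx; apply/andP; split.
    apply: (le_trans h1); apply: leU2; [exact: leUl|exact: lexx].
  apply: (le_trans h2); apply: leU2; [exact: leUr|exact: lexx].
- move=> y cy [z nz yz]; apply: nz; apply: (pf_up pr) rs.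
  apply/(HL c x z); apply: le_trans (le_trans cy yz) _; rewrite joinC.
  exact: lexx.
exists s; split => //.
- move=> y sy; apply: NNPP => ny; apply: (Is y sy); exists y => //; exact: leUl.
- by apply: Fs.
- move=> sx; apply: (Is x sx); exists \bot; first exact: pf_bot.
  by rewrite join0x.
Qed.

Lemma K n (p : L -> Prop) : prime_filter p -> height_ge n p ->
  exists c, p c /\ codim_ge n c.
Proof.
elim: n p => [|n IH] p pp /=.
  by move=> _; exists \top; split => //; exact: pf_top.
move=> [q [pq [[qp [x [px nqx]]] hq]]].
have [c [qc cc]] := IH q pq hq.
have sq := sub_in pq qc nqx.
exists (x `&` sub c x); split.
  by apply: (pf_meet pp) => //; exact: qp.
move=> r pr ry.
have rx : r x by apply: (pf_up pr) ry; exact: leIl.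
have rs : r (sub c x) by apply: (pf_up pr) ry; exact: leIr.
have [s [ps sr sc nsx]] := GDint pr rs.
exists s; split => //; split; last exact: cc.
by split => //; exists x.
Qed.

Lemma height_coheight n m (q : L -> Prop) : prime_filter q ->
  height_ge n q -> coheight_ge m q -> exists q0 : L -> Prop, prime_filter q0 /\ coheight_ge (n + m) q0.
Proof.
elim: n m q => [|n IH] m q pq /=; first by move=> _ h; exists q.
move=> [q' [pq' [sq hq']]] hc.
have := IH m.+1 q' pq' hq'; rewrite addnS; apply.
by exists q.
Qed.

Lemma coheight_height n m (q : L -> Prop) : prime_filter q ->
  coheight_ge n q -> height_ge m q -> exists q0 : L -> Prop, prime_filter q0 /\ height_ge (n + m) q0.
Proof.
elim: n m q => [|n IH] m q pq /=; first by move=> _ h; exists q.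
move=> [q' [pq' [sq hq']]] hc.
have := IH m.+1 q' pq' hq'; rewrite addnS; apply.
by exists q.
Qed.

End Basics.

Section Morph.
Context {d1 d2 : Order.disp_t} {L : tbDistrLatticeType d1} {L' : tbDistrLatticeType d2}.
Variables (sub : L -> L -> L) (sub' : L' -> L' -> L').
Hypotheses (HL : coHeyting sub) (HL' : coHeyting sub').
Variable phi : L -> L'.
Hypothesis Hphi : coH_morphism sub sub' phi.

Lemma phi_bot : phi \bot = \bot. Proof. by case: Hphi. Qed.
Lemma phi_top : phi \top = \top. Proof. by case: Hphi. Qed.
Lemma phiU a b : phi (a `|` b) = phi a `|` phi b. Proof. by case: Hphi. Qed.
Lemma phiI a b : phi (a `&` b) = phi a `&` phi b. Proof. by case: Hphi. Qed.
Lemma phiS a b : phi (sub a b) = sub' (phi a) (phi b). Proof. by case: Hphi. Qed.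

Lemma phi_mono a b : a <= b -> phi a <= phi b.
Proof. by move=> ab; rewrite -(join_r ab) phiU; exact: leUl. Qed.

Lemma pre_prime (q : L' -> Prop) : prime_filter q -> prime_filter (fun a => q (phi a)).
Proof.
move=> pq; split.
- by rewrite phi_top; exact: pf_top pq.
- by rewrite phi_bot; exact: pf_bot pq.
- by move=> a b ab qa; apply: (pf_up pq) qa; exact: phi_mono.
- by move=> a b qa qb; rewrite phiI; exact: pf_meet pq qa qb.
- by move=> a b; rewrite phiU; exact: pf_prime pq.
Qed.

Lemma GD (q : L' -> Prop) (p : L -> Prop) : prime_filter q -> prime_filter p ->
  (forall a, p a -> q (phi a)) ->
  exists q', [/\ prime_filter q', (forall y, q' y -> q y) &
     (forall a, q' (phi a) <-> p a)].
Proof.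
move=> pq pp pq'.
have [|||||||s [ps [Fs Is]]] := PFT (fun y => exists2 a, p a & phi a <= y)
   (fun y => exists b c, [/\ ~ p b, ~ q c & y <= phi b `|` c]).
- by exists \top; [exact: pf_top pp|exact: lex1].
- by move=> a b ab [x px xa]; exists x => //; exact: (le_trans xa).
- move=> a b [x px xa] [y py yb]; exists (x `&` y); first exact: pf_meet pp px py.
  by rewrite phiI; apply: leI2.
- exists \bot, \bot; split; [exact: pf_bot pp|exact: pf_bot pq|exact: le0x].
- by move=> a b ab [x [y [h1 h2 h3]]]; exists x, y; split => //; exact: (le_trans ab).
- move=> a b [x1 [y1 [n1 m1 h1]]] [x2 [y2 [n2 m2 h2]]].
  exists (x1 `|` x2), (y1 `|` y2); split.
  + by case/(pf_prime pp).
  + by case/(pf_prime pq).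
  + rewrite phiU leUx; apply/andP; split.
      apply: (le_trans h1); apply: leU2; exact: leUl.
    apply: (le_trans h2); apply: leU2; exact: leUr.
- move=> y [a pa ay] [b [c [nb nc yc]]]; apply: nc.
  have hs : p (sub a b) by exact: (sub_in sub HL pp pa nb).
  apply: (pf_up pq) (pq' _ hs); rewrite phiS.
  by apply/(HL' (phi a) (phi b) c); exact: (le_trans ay).
exists s; split => //.
- move=> y sy; apply: NNPP => ny; apply: (Is y sy); exists \bot, y; split.
  + exact: pf_bot pp.
  + exact: ny.
  + by rewrite phi_bot join0x.
- move=> a; split; last by move=> pa; apply: Fs; exists a.
  move=> sa; apply: NNPP => npa; apply: (Is _ sa); exists a, \bot; split => //.
  + exact: pf_bot pq.
  + by rewrite joinx0.
Qed.

Lemma height_push n (q : L' -> Prop) : prime_filter q ->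
  height_ge n (fun a => q (phi a)) -> height_ge n q.
Proof.
elim: n q => [|n IH] q pq //=.
move=> [p [pp [[pq' [x [qx npx]]] hp]]].
have [q' [pq'' q'q q'p]] := GD q p pq pp pq'.
exists q'; split => //; split.
  split => //; exists (phi x); split => //; by move/q'p.
apply: IH => //.
have -> : (fun a => q' (phi a)) = p.
  by apply: functional_extensionality => a; apply: propositional_extensionality.
exact: hp.
Qed.

Hypothesis Hs : surj phi.

Lemma height_pull n (q : L' -> Prop) : prime_filter q ->
  height_ge n q -> height_ge n (fun a => q (phi a)).
Proof.
elim: n q => [|n IH] q pq //=.
move=> [q' [pq' [[q'q [x [qx nq'x]]] hq']]].
exists (fun a => q' (phi a)); split; first exact: pre_prime.
split; last exact: IH.
split; first by move=> a; exact: q'q.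
have [a ax] := Hs x; by exists a; rewrite ax.
Qed.

End Morph.
Theorem corollary3p9 (d1 d2 : Order.disp_t)
  (L : tbDistrLatticeType d1) (L' : tbDistrLatticeType d2)
  (sub : L -> L -> L) (sub' : L' -> L' -> L')
  (HL : coHeyting sub) (HL' : coHeyting sub')
  (phi : L -> L') (Hphi : coH_morphism sub sub' phi)
  (d : nat) (hd : (0 < d)%N) :
  (* (1) *)
  (forall a, dIdeal L d a -> dIdeal L' d (phi a)) /\
  (* (2) *)
  (surj phi ->
     (forall b, dIdeal L' d b <-> exists2 a, dIdeal L d a & phi a = b) /\
     (dim_lt L' d <-> (forall a, dIdeal L d a -> kernel phi a)) /\
     ((forall a, kernel phi a -> dIdeal L d a) <->
      (forall a, dIdeal L' d (phi a) <-> dIdeal L d a))) /\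
  (* (3) *)
  (surj phi -> forall e, is_eps L d e ->
     (exists e', is_eps L' d e') /\ is_eps L' d (phi e)).
Proof.
have P1 a : dIdeal L d a -> dIdeal L' d (phi a).
  move=> ha q pq qa; apply: (height_push sub sub' HL HL' phi Hphi d q pq).
  exact: ha (pre_prime sub sub' phi Hphi q pq) qa.
have P2a : surj phi -> forall b, dIdeal L' d b -> exists2 a, dIdeal L d a & phi a = b.
  move=> Hs b hb; have [a0 a0b] := Hs b.
  apply: NNPP => hno.
  have [|||||||r [pr [Fr Ir]]] := PFT (fun y => b <= y)
     (fun y => exists2 a, dIdeal L d a & y <= phi a).
  - exact: lex1.
  - by move=> x y xy bx; exact: (le_trans bx).
  - by move=> x y bx by'; rewrite lexI bx by'.
  - by exists \bot; [exact: codim_bot|exact: le0x].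
  - by move=> x y xy [a ha ya]; exists a => //; exact: (le_trans xy).
  - move=> x y [a ha xa] [a' ha' ya']; exists (a `|` a').
      exact: codim_join.
    by rewrite (phiU sub sub' phi Hphi); apply: leU2.
  - move=> y by' [a ha ya]; apply: hno; exists (a0 `&` a).
      by apply: (codim_down d _ a) => //; exact: leIr.
    rewrite (phiI sub sub' phi Hphi) a0b; apply/eqP; rewrite eq_meetl.
    exact: (le_trans by').
  have hr := hb r pr (Fr b (lexx b)).
  have hp := height_pull sub sub' phi Hphi Hs d r pr hr.
  have [c [rc cc]] := K sub HL d _ (pre_prime sub sub' phi Hphi r pr) hp.
  by apply: (Ir (phi c) rc); exists c.
split; first exact: P1.
split.
  move=> Hs; split.
    move=> b; split; first exact: P2a.
    by case=> a ha <-; exact: P1.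
  split; first split.
    move=> Hdim a ha; apply: NNPP => nk.
    have [|||||||q [pq [Fq Iq]]] := PFT (fun y => phi a <= y) (fun y => y <= \bot).
    - exact: lex1.
    - by move=> x y xy bx; exact: (le_trans bx).
    - by move=> x y bx by'; rewrite lexI bx by'.
    - exact: lexx.
    - by move=> x y xy yb; exact: (le_trans xy).
    - by move=> x y xb yb; rewrite leUx xb yb.
    - move=> y ay yb; apply: nk; apply/eqP; rewrite -lex0; exact: (le_trans ay).
    have hq := P1 a ha q pq (Fq _ (lexx _)).
    have [q0 [pq0 hc]] := height_coheight d 0 q pq hq I.
    rewrite addn0 in hc.
    exact: Hdim q0 pq0 (pf_top pq0) hc.
  move=> Hker q pq _ hc.
  have [r [pr hr]] := coheight_height d 0 q pq hc I.
  rewrite addn0 in hr.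
  have hp := height_pull sub sub' phi Hphi Hs d r pr hr.
  have [c [rc cc]] := K sub HL d _ (pre_prime sub sub' phi Hphi r pr) hp.
  by move: rc; rewrite /= (Hker c cc); exact: pf_bot pr.
  split.
    move=> Hk a; split; last exact: P1.
    move=> /(P2a Hs) [a' ha' e].
    apply: (codim_down d a (a' `|` sub a a')); first exact: sub_le.
    apply: codim_join => //; apply: Hk.
    rewrite /kernel (phiS sub sub' phi Hphi) e; apply/eqP; rewrite -lex0.
    by apply/(HL' (phi a) (phi a) \bot); rewrite joinx0.
  move=> H a ka; apply/H; rewrite ka; exact: codim_bot.
move=> Hs e he; suff E : is_eps L' d (phi e) by split => //; exists (phi e).
move=> b; split.
  move=> /(P2a Hs) [a ha <-]; apply: (phi_mono sub sub' phi Hphi); exact/he.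
move=> be; apply: (codim_down d b (phi e) be); apply: P1; exact/he.
Qed.
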